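(* Let $n_1,n_2,n_3\in\mathbb{N}$, let $\sigma$ be a segment label map on $G=\{1,\dots,n_1\}\times\{1,\dots,n_2\}\times\{1,\dots,n_3\}$, fix any decomposition of $T$ into blocks, and let $\tau'$ be the output of the block-wise method. For each block $B$ let $\mu_B$ denote the labeling of $B$ after Step 2 (i.e. $\lambda_B$ with offsets added, before label reconciliation). Then for each block $B$, any 1-cell $t_1\in B$ and any 2-cell $t_2\in\Gamma(t_1)$: $\mu_B(t_2)\neq\mu_B(s)$ for all $s\in\Gamma(t_1)\setminus\{t_2\}$ if and only if $\tau'(t_2)\neq\tau'(s)$ for all $s\in\Gamma(t_1)\setminus\{t_2\}$.
   Context: Voxel grid and segmentation: $G=\{1,\dots,n_1\}\times\{1,\dots,n_2\}\times\{1,\dots,n_3\}$; voxels $v,w$ are adjacent iff $\sum_i|v_i-w_i|=1$. A segment label map is $\sigma:G\to\mathbb{N}=\{1,2,\dots\}$ such that each level set $\sigma^{-1}(l)$ is connected w.r.t. this adjacency. Topological grid: $T=\{1,\dots,2n_1-1\}\times\{1,\dots,2n_2-1\}\times\{1,\dots,2n_3-1\}$; a cell with exactly $j$ odd coordinates is a $j$-cell. Voxel $r$ corresponds to the 3-cell $2r-1$. Two cells are 6-neighbors if they differ by $1$ in exactly one coordinate. For a $j$-cell $t$, $\Gamma(t)$ is the set of 6-neighbors of $t$ in $T$ that are $(j+1)$-cells. Cells $t_1,t_2$ are connected, $t_1\leftrightarrow t_2$, iff there is $t\in T$ with $t_1,t_2\in\Gamma(t)$. Procedure LABEL: for a voxel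 box $\prod_i\{a_i,\dots,b_i\}\subseteq G$ let $B=\prod_i\{2a_i-1,\dots,2b_i-1\}$ be its cell box (for non-3-cells $t\in B$, $\Gamma(t)\subseteq B$). $\mathrm{LABEL}(\sigma,B)$ produces $\lambda:B\to\mathbb{N}_0$: (1) $\lambda(2r-1)=\sigma(r)$ for 3-cells. (2) For $j=2,1,0$ in this order: for each $j$-cell $t\in B$ let $\theta(t)$ be the set of positive integers occurring exactly once in $(\lambda(s))_{s\in\Gamma(t)}$; $t$ is active iff $\theta(t)\ne\emptyset$, inactive $j$-cells get label $0$; the active $j$-cells of $B$ are partitioned into maximal sets of cells with equal $\theta$ that are connected by $\leftrightarrow$-paths inside the set; these classes are numbered $1,\dots,m_j(B)$ arbitrarily and each active $j$-cell gets its class number. Block-wise method: for each axis $i$ choose odd integers $1=a^i_0<\dots<a^i_{m_i}=2n_i-1$; blocks are the boxes $\prod_i\{a^i_{k_i-1},\dots,a^i_{k_i}\}$. Step 1: $\lambda_B=\mathrm{LABEL}(\sigma,B)$ for each block. Step 2: with blocks ordered $B_1,\dots,B_K$, add offset $\sum_{k'<k}m_j(B_{k'})$ to each positive $j$-cell label of $\lambda_{B_k}$ ($j\in\{0,1,2\}$). Step 3: for $j\in\{1,2\}$, via union–find, unite the labels received in different blocks by any active $j$-cell lying in several blocks, and replace every positive $j$-cell label by its set representative. Step 4: for each 0-cell $t_0$ and each pair of distinct 1-cell labels occurring exactly once among the current labels of $\Gamma(t_0)$, merge the two labels if the corresponding 1-cells bound the same set of current 2-cell labels; if any merge took place at $t_0$,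 recompute the activity of $t_0$ and set its label to $0$ if inactive. The result is $\tau':T\to\mathbb{N}_0$. *)

(* Defs.v *)
From mathcomp Require Import all_boot.
Set Implicit Arguments.
Unset Strict Implicit.
Unset Printing Implicit Defensive.

Definition cell := (nat * nat * nat)%type.
Definition cx (t : cell) : nat := t.1.1.
Definition cy (t : cell) : nat := t.1.2.
Definition cz (t : cell) : nat := t.2.

(** number of odd coordinates: t is a (dim t)-cell *)
Definition dim (t : cell) : nat := odd (cx t) + odd (cy t) + odd (cz t).

Definition inG (n r : cell) : bool :=
  [&& 0 < cx r <= cx n, 0 < cy r <= cy n & 0 < cz r <= cz n].
Definition inT (n t : cell) : bool :=
  [&& 0 < cx t <= 2 * cx n - 1, 0 < cy t <= 2 * cy n - 1
    & 0 < cz t <= 2 * cz n - 1].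

Definition absd (a b : nat) : nat := (a - b) + (b - a).
Definition adjacent (r w : cell) : bool :=
  absd (cx r) (cx w) + absd (cy r) (cy w) + absd (cz r) (cz w) == 1.

Definition is_segment_map (n : cell) (sigma : cell -> nat) : Prop :=
  (forall r, inG n r -> 0 < sigma r) /\
  (forall r w, inG n r -> inG n w -> sigma r = sigma w ->
     exists p : seq cell,
       [/\ path adjacent r p, last r p = w
         & all (fun v => inG n v && (sigma v == sigma r)) p]).

(** the voxel r corresponding to the 3-cell t = 2r - 1 *)
Definition voxel_of (t : cell) : cell :=
  ((cx t).+1./2, (cy t).+1./2, (cz t).+1./2).

Definition neighbors6 (t : cell) : seq cell :=
  [:: ((cx t).+1, cy t, cz t) ; ((cx t).-1, cy t, cz t);
      (cx t, (cy t).+1, cz t) ; (cx t, (cy t).-1, cz t);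
      (cx t, cy t, (cz t).+1) ; (cx t, cy t, (cz t).-1)].

Definition Gamma (n t : cell) : seq cell :=
  [seq s <- neighbors6 t | inT n s && (dim s == (dim t).+1)].

Definition conn (n : cell) (t1 t2 : cell) : Prop :=
  exists t, [/\ inT n t, t1 \in Gamma n t & t2 \in Gamma n t].

Definition theta (lab : cell -> nat) (S : seq cell) (x : nat) : bool :=
  (0 < x) && (count_mem x (map lab S) == 1).
Definition active (lab : cell -> nat) (S : seq cell) : Prop :=
  exists x, theta lab S x.

(** a path x = c0, c1, ..., ck (p = [:: c1; ...; ck]) with consecutive
    cells related by R and every ci (i >= 1) satisfying P *)
Fixpoint chain (R : cell -> cell -> Prop) (P : cell -> Prop)
    (x : cell) (p : seq cell) : Prop :=
  match p with
  | [::] => True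
  | y :: p' => [/\ R x y, P y & chain R P y p']
  end.

Definition block := (cell * cell)%type.
Definition inB (b : block) (t : cell) : bool :=
  [&& cx b.1 <= cx t <= cx b.2, cy b.1 <= cy t <= cy b.2
    & cz b.1 <= cz t <= cz b.2].

Definition same_class (n : cell) (b : block) (lab : cell -> nat) (j : nat)
    (t t' : cell) : Prop :=
  let P := fun c => [/\ inB b c, dim c = j, active lab (Gamma n c)
                      & forall x, theta lab (Gamma n c) x =
                                  theta lab (Gamma n t) x] in
  P t' /\ exists p, chain (conn n) P t p /\ last t p = t'.

(** lab (with class counts m j = m_j(B)) is a possible output of
    LABEL(sigma, B) (class numbering is arbitrary). *)
Definition is_LABEL (n : cell) (sigma : cell -> nat) (b : block)
    (lab : cell -> nat) (m : nat -> nat) : Prop :=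
  (forall t, inB b t -> dim t = 3 -> lab t = sigma (voxel_of t)) /\
  (forall j, j < 3 ->
    (forall t, inB b t -> dim t = j -> ~ active lab (Gamma n t) -> lab t = 0) /\
    (forall t, inB b t -> dim t = j -> active lab (Gamma n t) ->
        0 < lab t <= m j) /\
    (forall k, 0 < k <= m j ->
        exists t, [/\ inB b t, dim t = j, active lab (Gamma n t) & lab t = k]) /\
    (forall t t', inB b t -> inB b t' -> dim t = j -> dim t' = j ->
        active lab (Gamma n t) -> active lab (Gamma n t') ->
        (lab t = lab t' <-> same_class n b lab j t t'))).

Definition valid_axis (ni : nat) (a : seq nat) : bool :=
  [&& head 0 a == 1, last 0 a == 2 * ni - 1, sorted ltn a & all odd a].
Definition intervals (a : seq nat) : seq (nat * nat) := zip a (behead a).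
Definition blocks (A1 A2 A3 : seq nat) : seq block :=
  flatten [seq [seq ((p1.1, p2.1, p3.1), (p1.2, p2.2, p3.2))
                 | p2 <- intervals A2, p3 <- intervals A3]
          | p1 <- intervals A1].

Definition offset (ordB : seq block) (m : block -> nat -> nat) (j : nat)
    (b : block) : nat :=
  \sum_(b' <- take (index b ordB) ordB) m b' j.
Definition mu_of (lam : block -> cell -> nat) (m : block -> nat -> nat)
    (ordB : seq block) (b : block) (t : cell) : nat :=
  if (dim t < 3) && (0 < lam b t) then lam b t + offset ordB m (dim t) b
  else lam b t.

Inductive eqv (R : nat -> nat -> Prop) : nat -> nat -> Prop :=
| eqv_base x y : R x y -> eqv R x y
| eqv_refl x : eqv R x x
| eqv_sym x y : eqv R x y -> eqv R y x
| eqv_trans x y z : eqv R x y -> eqv R y z -> eqv R x z.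
Definition is_rep (R : nat -> nat -> Prop) (rep : nat -> nat) : Prop :=
  (forall x, eqv R x (rep x)) /\ (forall x y, eqv R x y -> rep x = rep y).

(** Step 3: labels received by an active j-cell lying in several blocks *)
Definition unite (A1 A2 A3 : seq nat) (mu : block -> cell -> nat) (j : nat)
    (x y : nat) : Prop :=
  exists b b' t, [/\ b \in blocks A1 A2 A3, b' \in blocks A1 A2 A3,
    inB b t, inB b' t & [/\ dim t = j, 0 < mu b t, 0 < mu b' t,
                           x = mu b t & y = mu b' t]].

(** labels after Step 3 (3-cells carry sigma; 0-cells keep a label received
    from one of their blocks) *)
Definition step3_labels (n : cell) (sigma : cell -> nat) (A1 A2 A3 : seq nat)
    (mu : block -> cell -> nat) (rep1 rep2 : nat -> nat) (tau3 : cell -> nat)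
    : Prop :=
  (forall t, inT n t -> dim t = 3 -> tau3 t = sigma (voxel_of t)) /\
  (forall b t, b \in blocks A1 A2 A3 -> inB b t -> dim t = 2 ->
     tau3 t = if 0 < mu b t then rep2 (mu b t) else 0) /\
  (forall b t, b \in blocks A1 A2 A3 -> inB b t -> dim t = 1 ->
     tau3 t = if 0 < mu b t then rep1 (mu b t) else 0) /\
  (forall t, inT n t -> dim t = 0 ->
     exists b, [/\ b \in blocks A1 A2 A3, inB b t & tau3 t = mu b t]).

Definition mergeable (n : cell) (S : cell -> nat) (t0 : cell) (x y : nat)
    : Prop :=
  exists c c', [/\ c \in Gamma n t0, c' \in Gamma n t0, S c = x, S c' = y &
    [/\ x <> y, theta S (Gamma n t0) x, theta S (Gamma n t0) y &
        forall z, (z \in map S (Gamma n c)) = (z \in map S (Gamma n c'))]].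

Definition step4_step (n : cell) (S : cell -> nat) (t0 : cell)
    (S' : cell -> nat) : Prop :=
  exists rep, is_rep (mergeable n S t0) rep /\
  let S1 := fun c => if (dim c == 1) && (0 < S c) then rep (S c) else S c in
  (forall c, c <> t0 -> S' c = S1 c) /\
  (((exists x y, mergeable n S t0 x y) /\ ~ active S1 (Gamma n t0)) ->
     S' t0 = 0) /\
  (~ ((exists x y, mergeable n S t0 x y) /\ ~ active S1 (Gamma n t0)) ->
     S' t0 = S t0).

Fixpoint step4 (n : cell) (S : cell -> nat) (ord : seq cell)
    (Sfin : cell -> nat) : Prop :=
  match ord with
  | [::] => forall c, Sfin c = S c
  | t0 :: rest => exists S', step4_step n S t0 S' /\ step4 n S' rest Sfin
  end.

(** tau is a possible output tau' of the block-wise method, using the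
    Step-1 labelings lam (with class counts m) and the block order ordB. *)
Definition blockwise_output (n : cell) (sigma : cell -> nat)
    (A1 A2 A3 : seq nat) (lam : block -> cell -> nat)
    (m : block -> nat -> nat) (ordB : seq block) (tau : cell -> nat) : Prop :=
  (forall b, b \in blocks A1 A2 A3 -> is_LABEL n sigma b (lam b) (m b)) /\
  perm_eq ordB (blocks A1 A2 A3) /\
  let mu := mu_of lam m ordB in
  exists rep1 rep2 tau3 ord0,
    [/\ is_rep (unite A1 A2 A3 mu 1) rep1, is_rep (unite A1 A2 A3 mu 2) rep2,
        step3_labels n sigma A1 A2 A3 mu rep1 rep2 tau3,
        uniq ord0 /\ (forall t, (t \in ord0) = inT n t && (dim t == 0))
      & step4 n tau3 ord0 tau].

(* Main.v *)
Require Import Defs.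
From mathcomp Require Import all_boot zify.
From Stdlib Require Import Classical.

Lemma mem_zip2 (T : eqType) (s t : seq T) x y :
  (x, y) \in zip s t -> x \in s /\ y \in t.
Proof.
elim: s t => [|a s IH] [|c t] //=.
rewrite in_cons => /orP [/eqP [-> ->]|/IH [H1 H2]].
  by rewrite !in_cons !eqxx.
by rewrite !in_cons H1 H2 !orbT.
Qed.

Lemma interval_odd p a : all odd a -> p \in intervals a -> odd p.1 /\ odd p.2.
Proof.
case: p => x y /allP Ha /mem_zip2 [Hx Hy].
by split; apply: Ha => //; apply: mem_behead.
Qed.

Definition odd_bounds (b : block) : Prop :=
  [/\ odd (cx b.1), odd (cy b.1), odd (cz b.1) &
     [/\ odd (cx b.2), odd (cy b.2) & odd (cz b.2)]].

Lemma blocks_odd A1 A2 A3 b : all odd A1 -> all odd A2 -> all odd A3 ->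
  b \in blocks A1 A2 A3 -> odd_bounds b.
Proof.
move=> H1 H2 H3 /flattenP [s /mapP [p1 Hp1 ->]] /allpairsP [[p2 p3] [/= Hp2 Hp3 ->]].
have [a1 b1] := @interval_odd _ _ H1 Hp1.
have [a2 b2] := @interval_odd _ _ H2 Hp2.
have [a3 b3] := @interval_odd _ _ H3 Hp3.
by rewrite /odd_bounds /cx /cy /cz /=.
Qed.

Lemma nb6P x y z s : s \in neighbors6 (x, y, z) ->
  s = (x.+1, y, z) \/ s = (x.-1, y, z) \/ s = (x, y.+1, z) \/
  s = (x, y.-1, z) \/ s = (x, y, z.+1) \/ s = (x, y, z.-1).
Proof.
rewrite /neighbors6 /cx /cy /cz /= !inE.
by do ! (case/orP => [/eqP ->|]; [by auto 10|]); move/eqP ->; auto 10.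
Qed.

Lemma mem_Gamma n t s : s \in Gamma n t ->
  [/\ inT n s, dim s = (dim t).+1 & s \in neighbors6 t].
Proof. by rewrite mem_filter => /andP [/andP [H1 /eqP H2] H3]. Qed.

Lemma modo a : odd a -> a %% 2 = 1.
Proof. by rewrite modn2 => ->. Qed.

Lemma Gamma_inB b n t s : odd_bounds b -> inB b t -> s \in Gamma n t -> inB b s.
Proof.
case: b => [[[l1 l2] l3] [[h1 h2] h3]] [/modo o1 /modo o2 /modo o3 [/modo o4 /modo o5 /modo o6]].
case: t => [[x y] z] Hb /mem_Gamma [_ Hd /nb6P Hs].
move: Hb Hd o1 o2 o3 o4 o5 o6; rewrite /inB /dim /cx /cy /cz /=.
by case: Hs => [->|[->|[->|[->|[->|->]]]]] /=; rewrite -?modn2; lia.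
Qed.

Lemma Gamma_inT n t c d : c \in Gamma n t -> d \in Gamma n t -> c <> d -> inT n t.
Proof.
case: t => [[x y] z] /mem_Gamma [Hc _ /nb6P Hc'] /mem_Gamma [Hd _ /nb6P Hd'] Hne.
move: Hne Hc Hd; rewrite /inT /cx /cy /cz /=.
by case: Hc' => [->|[->|[->|[->|[->|->]]]]];
   case: Hd' => [->|[->|[->|[->|[->|->]]]]] /= Hne; try (by case: Hne); lia.
Qed.
Lemma offset_lt (ordB : seq block) m j b b' : b \in ordB ->
  index b ordB < index b' ordB ->
  offset ordB m j b + m b j <= offset ordB m j b'.
Proof.
move=> Hb Hlt; rewrite /offset.
have -> : index b' ordB = (index b ordB).+1 + (index b' ordB - (index b ordB).+1) by lia.
rewrite takeD (take_nth b); last by rewrite index_mem.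
rewrite nth_index // -cats1 !big_cat big_seq1 /=; exact: leq_addr.
Qed.

Lemma disj (lam : block -> cell -> nat) m (ordB : seq block) b b' t t' j :
  b \in ordB -> b' \in ordB -> 0 < lam b t <= m b j -> 0 < lam b' t' <= m b' j ->
  lam b t + offset ordB m j b = lam b' t' + offset ordB m j b' -> b = b'.
Proof.
move=> Hb Hb' H1 H2 Heq.
case: (eqVneq b b') => // ne; exfalso.
case: (ltngtP (index b ordB) (index b' ordB)) => Hi.
- have := @offset_lt ordB m j _ _ Hb Hi; lia.
- have := @offset_lt ordB m j _ _ Hb' Hi; lia.
- by move: ne; rewrite -(nth_index b Hb) Hi nth_index // eqxx.
Qed.

Lemma step4_keep2 n ord : forall S Sfin, (forall t, t \in ord -> dim t = 0) ->
  step4 n S ord Sfin -> forall c, dim c = 2 -> Sfin c = S c.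
Proof.
elim: ord => [|t0 ord IH] S Sfin Hord /=; first by move=> H c _; exact: H.
move=> [S' [[rep [_ [Hc _]]] Hrest]] c Hdc.
rewrite (IH S' Sfin _ Hrest c Hdc); last by move=> t Ht; apply: Hord; rewrite in_cons Ht orbT.
rewrite Hc; first by rewrite Hdc.
move=> E; have := Hord t0; rewrite in_cons eqxx /= => /(_ isT).
by rewrite -E Hdc.
Qed.

Lemma lam_pos n sigma b lab mm t : is_LABEL n sigma b lab mm -> inB b t -> dim t = 2 ->
  0 < lab t -> active lab (Gamma n t) /\ lab t <= mm 2.
Proof.
move=> [_ HL] Hb Hd Hp; have [H0 [H1 _]] := HL 2 isT.
have Ha : active lab (Gamma n t).
  by apply: NNPP => Hn; move: Hp; rewrite H0.
by split => //; have /andP [] := H1 t Hb Hd Ha.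
Qed.

Lemma theta_conv n sigma b lab mm c : is_LABEL n sigma b lab mm -> odd_bounds b ->
  inB b c -> dim c = 2 ->
  theta lab (Gamma n c) =1 theta (fun s => sigma (voxel_of s)) (Gamma n c).
Proof.
move=> [H3 _] Ho Hb Hd x; rewrite /theta.
suff -> : map lab (Gamma n c) = map (fun s => sigma (voxel_of s)) (Gamma n c) by [].
apply/eq_in_map => s Hs; apply: H3.
  exact: (@Gamma_inB b n c s Ho Hb Hs).
by have [_ -> _] := mem_Gamma _ _ _ Hs; rewrite Hd.
Qed.

Lemma eqv_pos (R : nat -> nat -> Prop) x y :
  (forall a b, R a b -> 0 < a /\ 0 < b) -> eqv R x y -> (0 < x) = (0 < y).
Proof.
move=> HR; elim.
- by move=> a b /HR [-> ->].
- by [].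
- by move=> a b _ ->.
- by move=> a b c _ -> _ ->.
Qed.

Theorem proposition3 (n1 n2 n3 : nat) (sigma : cell -> nat)
    (A1 A2 A3 : seq nat) (lam : block -> cell -> nat)
    (m : block -> nat -> nat) (ordB : seq block) (tau : cell -> nat) :
  0 < n1 -> 0 < n2 -> 0 < n3 ->
  is_segment_map (n1, n2, n3) sigma ->
  valid_axis n1 A1 -> valid_axis n2 A2 -> valid_axis n3 A3 ->
  blockwise_output (n1, n2, n3) sigma A1 A2 A3 lam m ordB tau ->
  forall (b : block) (t1 t2 : cell),
    b \in blocks A1 A2 A3 -> inB b t1 -> dim t1 = 1 ->
    t2 \in Gamma (n1, n2, n3) t1 ->
    ((forall s, s \in Gamma (n1, n2, n3) t1 -> s <> t2 ->
        mu_of lam m ordB b t2 <> mu_of lam m ordB b s) <->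
     (forall s, s \in Gamma (n1, n2, n3) t1 -> s <> t2 -> tau t2 <> tau s)).
Proof.
move=> _ _ _ _ /and4P [_ _ _ Ho1] /and4P [_ _ _ Ho2] /and4P [_ _ _ Ho3].
set N := (n1, n2, n3).
move=> [HL [Hperm [rep1 [rep2 [tau3 [ord0 [_ Hr2 [_ [H3b _]] [_ Hord] H4]]]]]]].
move=> b t1 t2 Hb Hbt1 Hd1 Ht2.
set mu := mu_of lam m ordB.
have Hodd : forall b', b' \in blocks A1 A2 A3 -> odd_bounds b'.
  by move=> b' Hb'; apply: (blocks_odd A1 A2 A3 b' Ho1 Ho2 Ho3 Hb').
have HordB : forall b', b' \in blocks A1 A2 A3 -> b' \in ordB.
  by move=> b'; rewrite (perm_mem Hperm).
have mu2 : forall b' t, dim t = 2 ->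
    mu b' t = if 0 < lam b' t then lam b' t + offset ordB m 2 b' else lam b' t.
  by move=> b' t Hd; rewrite /mu /mu_of Hd.
have mupos : forall b' t, dim t = 2 -> (0 < mu b' t) = (0 < lam b' t).
  by move=> b' t Hd; rewrite mu2 //; case Hp: (0 < lam b' t) => //; rewrite addn_gt0 Hp.
have HG : forall c, c \in Gamma N t1 -> inB b c /\ dim c = 2.
  move=> c Hc; split; first exact: (Gamma_inB b N t1 c (Hodd b Hb) Hbt1 Hc).
  by have [_ -> _] := mem_Gamma _ _ _ Hc; rewrite Hd1.
have Htau : forall c, c \in Gamma N t1 ->
    tau c = if 0 < mu b c then rep2 (mu b c) else 0.
  move=> c Hc; have [Hbc Hdc] := HG c Hc.
  rewrite (step4_keep2 N ord0 tau3 tau _ H4 c Hdc); last first.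
    by move=> t; rewrite Hord => /andP [_ /eqP].
  exact: H3b.
pose L3 := fun s => sigma (voxel_of s).
pose Th := fun t => theta L3 (Gamma N t).
pose Lab := fun x t => exists b', [/\ b' \in blocks A1 A2 A3, inB b' t, dim t = 2,
   0 < lam b' t & mu b' t = x].
have Qxx : forall x t t', Lab x t -> Lab x t' -> Th t =1 Th t'.
  move=> x t t' [b1 [Hb1 Hbt Hdt Hp Hm]] [b2 [Hb2 Hbt' Hdt' Hp' Hm']].
  have [Ha Hle] := lam_pos _ _ _ _ _ _ (HL b1 Hb1) Hbt Hdt Hp.
  have [Ha' Hle'] := lam_pos _ _ _ _ _ _ (HL b2 Hb2) Hbt' Hdt' Hp'.
  move: Hm Hm'; rewrite !mu2 // Hp Hp' => Hm Hm'.
  have Eb : b1 = b2.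
    apply: (disj lam m ordB b1 b2 t t' 2 (HordB _ Hb1) (HordB _ Hb2));
      [by rewrite Hp| by rewrite Hp'| by rewrite Hm Hm'].
  subst b2.
  have El : lam b1 t = lam b1 t' by move: Hm'; rewrite -Hm; move/addIn.
  have [_ HL2] := HL b1 Hb1; have [_ [_ [_ Hiff]]] := HL2 2 isT.
  have [[_ _ _ Hth] _] := (Hiff t t' Hbt Hbt' Hdt Hdt' Ha Ha').1 El.
  move=> y; rewrite /Th -(theta_conv _ _ _ _ _ _ (HL b1 Hb1) (Hodd _ Hb1) Hbt Hdt y).
  by rewrite -(theta_conv _ _ _ _ _ _ (HL b1 Hb1) (Hodd _ Hb1) Hbt' Hdt' y) Hth.
have Hun : forall x y, unite A1 A2 A3 mu 2 x y -> 0 < x /\ 0 < y.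
  by move=> x y [b1 [b2 [t [_ _ _ _ [_ H1 H2 -> ->]]]]].
have HE : forall x y, eqv (unite A1 A2 A3 mu 2) x y ->
    x = y \/ exists u u', [/\ Lab x u, Lab y u' & Th u =1 Th u'].
  move=> x y; elim.
  - move=> a c [b1 [b2 [t [Hb1 Hb2 Hbt1' Hbt2' [Hdt H1 H2 Ea Ec]]]]].
    right; exists t, t; split => //.
    + by exists b1; split => //; rewrite -(mupos b1 t Hdt).
    + by exists b2; split => //; rewrite -(mupos b2 t Hdt).
  - by move=> a; left.
  - move=> a c _ [E|[u [u' [H1 H2 H3]]]]; first by left.
    by right; exists u', u; split => // z; rewrite H3.
  - move=> a c d _ IH1 _ IH2.
    case: IH1 => [E1|[u [u' [H1 H2 H3]]]]; case: IH2 => [E2|[v [v' [G1 G2 G3]]]].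
    + by left; rewrite E1 E2.
    + by right; exists v, v'; rewrite E1.
    + by right; exists u, u'; rewrite -E2.
    + right; exists u, v'; split => // z.
      by rewrite H3 (Qxx c u' v H2 G1 z) G3.
have Hsame : forall c d, c \in Gamma N t1 -> d \in Gamma N t1 -> c <> d ->
    0 < lam b c -> 0 < lam b d -> Th c =1 Th d -> lam b c = lam b d.
  move=> c d Hc Hd Hne Hpc Hpd HT.
  have [Hbc Hdc] := HG c Hc; have [Hbd Hdd] := HG d Hd.
  have [Hac _] := lam_pos _ _ _ _ _ _ (HL b Hb) Hbc Hdc Hpc.
  have [Had _] := lam_pos _ _ _ _ _ _ (HL b Hb) Hbd Hdd Hpd.
  have [_ HL2] := HL b Hb; have [_ [_ [_ Hiff]]] := HL2 2 isT.
  apply/(Hiff c d Hbc Hbd Hdc Hdd Hac Had); split.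
    split => // y.
    rewrite (theta_conv _ _ _ _ _ _ (HL b Hb) (Hodd _ Hb) Hbd Hdd y).
    by rewrite (theta_conv _ _ _ _ _ _ (HL b Hb) (Hodd _ Hb) Hbc Hdc y); exact: (esym (HT y)).
  exists [:: d]; split => //=; split => //.
    by exists t1; split => //; apply: (Gamma_inT N t1 c d Hc Hd Hne).
  split => // y.
  rewrite (theta_conv _ _ _ _ _ _ (HL b Hb) (Hodd _ Hb) Hbd Hdd y).
  by rewrite (theta_conv _ _ _ _ _ _ (HL b Hb) (Hodd _ Hb) Hbc Hdc y); exact: (esym (HT y)).
have [Hr2a Hr2b] := Hr2.
split => H s Hs Hne.
- rewrite !Htau //.
  have [Hbs Hds] := HG s Hs; have [Hbt2 Hdt2] := HG t2 Ht2.
  case Px : (0 < mu b t2); case Py : (0 < mu b s).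
  + move=> Er.
    have Ev : eqv (unite A1 A2 A3 mu 2) (mu b t2) (mu b s).
      apply: eqv_trans (Hr2a _) _; rewrite Er; exact: eqv_sym (Hr2a _).
    case: (HE _ _ Ev) => [Ee|[u [u' [H1 H2 H3]]]]; first exact: (H s Hs Hne).
    have Lt2 : Lab (mu b t2) t2 by exists b; split => //; rewrite -(mupos b t2 Hdt2).
    have Ls : Lab (mu b s) s by exists b; split => //; rewrite -(mupos b s Hds).
    apply: (H s Hs Hne).
    have El : lam b t2 = lam b s.
      apply: (Hsame t2 s Ht2 Hs (fun e => Hne (esym e))).
      * by rewrite -(mupos b t2 Hdt2).
      * by rewrite -(mupos b s Hds).
      * by move=> z; rewrite (Qxx _ _ _ Lt2 H1 z) H3 (Qxx _ _ _ H2 Ls z).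
    by rewrite !mu2 // El.
  + move=> Er0.
    by have := eqv_pos _ _ _ Hun (Hr2a (mu b t2)); rewrite Px Er0.
  + move=> Er0.
    by have := eqv_pos _ _ _ Hun (Hr2a (mu b s)); rewrite Py -Er0.
  + move=> _; apply: (H s Hs Hne).
    by move: Px Py; case: (mu b t2) => // _; case: (mu b s).
- by move=> Ee; apply: (H s Hs Hne); rewrite !Htau // Ee.
Qed.
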